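(* Let $A\in\mathbb{R}^{m\times n}$ have no zero row, with rows $a_1^T,\dots,a_m^T$, let $b\in\mathbb{R}^m$ with $Ax=b$ consistent, and let $x^\dagger$ be the minimum-norm least-squares solution. Let $0<\mu_i<2$ for $1\le i\le m$, ${\bf u}=(\mu_1,\dots,\mu_m)$, $\Lambda=\mathrm{diag}(\mu_1,\dots,\mu_m)$, $M=\mathrm{diag}(1/\|a_1\|_2^2,\dots,1/\|a_m\|_2^2)$, $P_k(\mu_k)=I-\mu_ka_ka_k^T/\|a_k\|_2^2$, $Q({\bf u})=P_m(\mu_m)\cdots P_1(\mu_1)$, and let $C({\bf u})\in\mathbb{R}^{m\times m}$ be a unit upper triangular matrix with $A_{\mathcal S}({\bf u})=C({\bf u})A$, where $A_{\mathcal S}({\bf u})=(Q_1({\bf u}_1)a_1,\dots,Q_m({\bf u}_m)a_m)^T$, $Q_j({\bf u}_j)=P_m(\mu_m)\cdots P_{j+1}(\mu_{j+1})$ for $j<m$, $Q_m({\bf u}_m)=I$. Let $y_0\in\mathbb{R}^n$, $y_k=y_{k-1}+A^T[C({\bf u})]^T\Lambda M(b-Ay_{k-1})$ for $k\ge1$, and $\bar e_k=y_k-x^\dagger-P_{N(A)}y_0$. Let $\sigma_i({\bf u})$ denote the singular values of $Q({\bf u})$. Then for all $k\ge1$, $$\|\bar e_k\|_2\le\max_{0<\sigma_i({\bf u})<1}\sigma_i({\bf u})\,\|\bar e_{k-1}\|_2\quad\text{and}\quad \|\bar e_k\|_2\le\max_{0<\sigma_i({\bf u})<1}[\sigma_i({\bf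 u})]^k\,\|\bar e_0\|_2.$$
   Context: $P_{N(A)}$ is the orthogonal projection onto the null space of $A$; the maxima are over those singular values of $Q({\bf u})$ lying strictly between $0$ and $1$. *)

(* Defs.v *)
From HB Require Import structures.
From mathcomp Require Import all_boot all_order all_algebra.
From mathcomp Require Import reals.
Set Implicit Arguments. Unset Strict Implicit. Unset Printing Implicit Defensive.
Import Order.TTheory GRing.Theory Num.Theory.
Local Open Scope ring_scope.

Section Defs.
Variable R : realType.

Definition norm2 (p : nat) (v : 'cV[R]_p) : R := Num.sqrt (\sum_i (v i 0) ^+ 2).

Definition arow (m n : nat) (A : 'M[R]_(m, n)) (k : 'I_m) : 'cV[R]_n := (row k A)^T.

Definition rownorm2 (m n : nat) (A : 'M[R]_(m, n)) (k : 'I_m) : R :=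
  norm2 (arow A k) ^+ 2.

Definition Pk (m n : nat) (A : 'M[R]_(m, n)) (mu : 'I_m -> R) (k : 'I_m) : 'M[R]_n :=
  1%:M - (mu k / rownorm2 A k) *: (arow A k *m (arow A k)^T).

(* Q(u) = P_m(mu_m) ... P_1(mu_1)  (leftmost factor has largest index) *)
Definition Qmat (m n : nat) (A : 'M[R]_(m, n)) (mu : 'I_m -> R) : 'M[R]_n :=
  \prod_(i < m) Pk A mu (rev_ord i).

Definition Qj (m n : nat) (A : 'M[R]_(m, n)) (mu : 'I_m -> R) (j : 'I_m) : 'M[R]_n :=
  \prod_(i < m | (j < rev_ord i)%N) Pk A mu (rev_ord i).

Definition AS (m n : nat) (A : 'M[R]_(m, n)) (mu : 'I_m -> R) : 'M[R]_(m, n) :=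
  \matrix_(i, j) (Qj A mu i *m arow A i) j 0.

Definition Lam (m : nat) (mu : 'I_m -> R) : 'M[R]_m := diag_mx (\row_i mu i).
Definition Mdiag (m n : nat) (A : 'M[R]_(m, n)) : 'M[R]_m :=
  diag_mx (\row_i (rownorm2 A i)^-1).

Definition unit_upper (m : nat) (C : 'M[R]_m) : Prop :=
  (forall i, C i i = 1) /\ (forall i j : 'I_m, (j < i)%N -> C i j = 0).

Definition min_norm_lsq (m n : nat) (A : 'M[R]_(m, n)) (b : 'cV[R]_m) (x : 'cV[R]_n) : Prop :=
  (forall y, norm2 (A *m x - b) <= norm2 (A *m y - b)) /\
  (forall y, norm2 (A *m y - b) <= norm2 (A *m x - b) -> norm2 x <= norm2 y).

Definition nullproj (m n : nat) (A : 'M[R]_(m, n)) (y z : 'cV[R]_n) : Prop :=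
  A *m z = 0 /\ (forall w : 'cV[R]_n, A *m w = 0 -> ((y - z)^T *m w) = 0).

Definition singular_value (n : nat) (Q : 'M[R]_n) (s : R) : Prop :=
  0 <= s /\ eigenvalue (Q^T *m Q) (s ^+ 2).

(* s = max { sigma_i : 0 < sigma_i < 1 }, with the convention max(empty) = 0 *)
Definition max_sv_in01 (n : nat) (Q : 'M[R]_n) (s : R) : Prop :=
  ((forall t, ~ (singular_value Q t /\ 0 < t < 1)) /\ s = 0) \/
  ((singular_value Q s /\ 0 < s < 1) /\
   (forall t, singular_value Q t -> 0 < t < 1 -> t <= s)).

End Defs.

(* Main.v *)
Require Import Defs.
From HB Require Import structures.
From mathcomp Require Import all_boot all_order all_algebra.
From mathcomp Require Import reals.
From mathcomp Require Import complex spectral sesquilinear.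
From mathcomp Require Import ring lra zify.
Import Order.TTheory GRing.Theory Num.Theory.
Local Open Scope ring_scope.
Set Implicit Arguments. Unset Strict Implicit. Unset Printing Implicit Defensive.

Lemma tele (T : pzRingType) (N : nat) (F : nat -> T) :
  1 - \prod_(i < N) F (N - i.+1)%N =
  \sum_(j < N) (\prod_(i < N | (j < N - i.+1)%N) F (N - i.+1)%N) * (1 - F j).
Proof.
elim: N => [|N IH]; first by rewrite !big_ord0 subrr.
rewrite big_ord_recl big_ord_recr /=.
have E1 : \prod_(i < N) F (N.+1 - (bump 0 i).+1)%N = \prod_(i < N) F (N - i.+1)%N.
  by apply: eq_bigr => i _; rewrite /bump /= add1n subSS.
rewrite E1.
have E2 : \prod_(i < N.+1 | (N < N.+1 - i.+1)%N) F (N.+1 - i.+1)%N = 1.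
  by apply: big1_seq => i /andP [H _]; move: H; rewrite ltn_subRL; lia.
rewrite E2 mul1r.
have E3 : forall j : 'I_N, \prod_(i < N.+1 | (widen_ord (leqnSn N) j < N.+1 - i.+1)%N) F (N.+1 - i.+1)%N
   = F N * \prod_(i < N | (j < N - i.+1)%N) F (N - i.+1)%N.
  move=> j; rewrite big_mkcond big_ord_recl /= subSS subn0 (ltn_ord j).
  by rewrite [in RHS]big_mkcond; congr (_ * _).
under eq_bigr => j _ do rewrite E3.
under eq_bigr => j _ do rewrite -mulrA.
rewrite -big_distrr /= -IH subSS subn0.
by rewrite mulrBr mulr1 addrC addrA subrK.
Qed.

Section Dot.
Variable R : realType.
Definition dot n (u w : 'cV[R]_n) := \sum_i u i 0 * w i 0.

Lemma dotC n (u w : 'cV[R]_n) : dot u w = dot w u.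
Proof. by apply: eq_bigr => i _; rewrite mulrC. Qed.

Lemma dot_ge0 n (u : 'cV[R]_n) : 0 <= dot u u.
Proof. by apply: sumr_ge0 => i _; rewrite -expr2 sqr_ge0. Qed.

Lemma dot_eq0 n (u : 'cV[R]_n) : dot u u = 0 -> u = 0.
Proof.
move=> /eqP; rewrite psumr_eq0 => [/allP H|i _]; last by rewrite -expr2 sqr_ge0.
apply/matrixP => i j; rewrite ord1 mxE.
by have := H i (mem_index_enum _); rewrite /= mulf_eq0 orbb => /eqP.
Qed.

Lemma dot_mx n (u w : 'cV[R]_n) : (u^T *m w) 0 0 = dot u w.
Proof. by rewrite mxE; apply: eq_bigr => i _; rewrite mxE. Qed.

Lemma dotDl n (u v w : 'cV[R]_n) : dot (u + v) w = dot u w + dot v w.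
Proof. by rewrite /dot -big_split; apply: eq_bigr => i _; rewrite mxE mulrDl. Qed.

Lemma dotNl n (u w : 'cV[R]_n) : dot (- u) w = - dot u w.
Proof. by rewrite /dot -sumrN; apply: eq_bigr => i _; rewrite mxE mulNr. Qed.

Lemma dotDZ n (u w : 'cV[R]_n) (c : R) :
  dot (u + c *: w) (u + c *: w) = dot u u + 2 * c * dot u w + c ^+ 2 * dot w w.
Proof.
rewrite /dot !mulr_sumr -!big_split; apply: eq_bigr => i _; rewrite !mxE /=; ring.
Qed.

Lemma norm2E n (u : 'cV[R]_n) : norm2 u = Num.sqrt (dot u u).
Proof. by rewrite /norm2; congr Num.sqrt; apply: eq_bigr => i _; rewrite expr2. Qed.
End Dot.

Section Contr.
Variable R : realType.
Lemma contract n N (F : nat -> 'M[R]_n) (Z : nat -> 'cV[R]_n -> Prop) :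
  (forall k z, dot (F k *m z) (F k *m z) <= dot z z /\
      (dot z z <= dot (F k *m z) (F k *m z) -> F k *m z = z /\ Z k z)) ->
  forall z, dot ((\prod_(i < N) F (N - i.+1)%N) *m z) ((\prod_(i < N) F (N - i.+1)%N) *m z) <= dot z z /\
   (dot z z <= dot ((\prod_(i < N) F (N - i.+1)%N) *m z) ((\prod_(i < N) F (N - i.+1)%N) *m z) ->
     (\prod_(i < N) F (N - i.+1)%N) *m z = z /\ forall k, (k < N)%N -> Z k z).
Proof.
move=> HF; elim: N => [|N IH] z.
  by rewrite big_ord0 mul1mx; split => // _; split.
rewrite big_ord_recl /= subSS subn0.
have E : \prod_(i < N) F (N.+1 - (bump 0 i).+1)%N = \prod_(i < N) F (N - i.+1)%N.
  by apply: eq_bigr => i _; rewrite /bump /= add1n subSS.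
rewrite E -mulmxE -mulmxA.
set Q := \prod_(i < N) F (N - i.+1)%N.
have [IH1 IH2] := IH z.
have [F1 F2] := HF N (Q *m z).
split; first exact: le_trans F1 IH1.
move=> Hle.
have Hq : dot z z <= dot (Q *m z) (Q *m z) := le_trans Hle F1.
have [Qz HZ] := IH2 Hq.
have Hq' : dot (Q *m z) (Q *m z) <= dot (F N *m (Q *m z)) (F N *m (Q *m z)).
  by rewrite Qz; rewrite Qz in Hle.
have [Fz HZN] := F2 Hq'.
split; first by rewrite Fz.
move=> k; rewrite ltnS leq_eqVlt => /orP [/eqP -> | kN]; last exact: HZ.
by rewrite -Qz.
Qed.
End Contr.

Section PkS.
Variable R : realType.
Variables (m n : nat) (A : 'M[R]_(m, n)) (mu : 'I_m -> R).

Lemma rownorm2E k : rownorm2 A k = dot (arow A k) (arow A k).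
Proof. by rewrite /rownorm2 norm2E sqr_sqrtr // dot_ge0. Qed.

Lemma PkE k z : Pk A mu k *m z =
   z + (- (mu k / rownorm2 A k * dot (arow A k) z)) *: arow A k.
Proof.
rewrite /Pk mulmxBl mul1mx -scalemxAl -mulmxA scaleNr.
congr (_ - _); apply/matrixP => i j; rewrite ord1 !mxE big_ord1 dot_mx !mxE.
by rewrite [A k i * _]mulrC mulrA.
Qed.

Lemma Pk_contr k z : row k A != 0 -> 0 < mu k < 2 ->
  dot (Pk A mu k *m z) (Pk A mu k *m z) <= dot z z /\
  (dot z z <= dot (Pk A mu k *m z) (Pk A mu k *m z) ->
     Pk A mu k *m z = z /\ dot (arow A k) z = 0).
Proof.
move=> rk /andP [m0 m2].
set a := arow A k; set t := dot a z.
have rpos : 0 < rownorm2 A k.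
  rewrite rownorm2E lt_def dot_ge0 andbT; apply/eqP => /dot_eq0 a0.
  move/eqP: rk; apply; rewrite -[row k A]trmxK; move: a0; rewrite /a /arow => ->; exact: trmx0.
set r := rownorm2 A k in rpos *.
have E : dot (Pk A mu k *m z) (Pk A mu k *m z) = dot z z - (mu k * (2 - mu k) / r) * t ^+ 2.
  rewrite PkE dotDZ -/a -/r -rownorm2E -/r (dotC z a) -/t.
  by field; rewrite gt_eqF.
have K0 : 0 < mu k * (2 - mu k) / r.
  by apply: divr_gt0 => //; apply: mulr_gt0 => //; rewrite subr_gt0.
rewrite E; split.
  by rewrite lerBlDr lerDl; apply: mulr_ge0; [exact: ltW | exact: sqr_ge0].
move=> H.
have t0 : t = 0.
  have : (mu k * (2 - mu k) / r) * t ^+ 2 <= 0 by move: H; set X := _ * t ^+ 2; lra.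
  rewrite pmulr_rle0 // => t2; apply/eqP; rewrite -sqrf_eq0 eq_le t2 sqr_ge0.
  by [].
split => //; rewrite PkE -/a -/r -/t t0 mulr0 oppr0 scale0r addr0 //.
Qed.
End PkS.

Section Ident.
Variable R : realType.
Variables (m n : nat) (A : 'M[R]_(m, n)) (mu : 'I_m -> R).

Definition Fn (k : nat) : 'M[R]_n := odflt 1%:M (omap (Pk A mu) (insub k)).
Lemma Fn_ord (i : 'I_m) : Fn i = Pk A mu i.
Proof. by rewrite /Fn valK. Qed.

Lemma QmatE : Qmat A mu = \prod_(i < m) Fn (m - i.+1)%N.
Proof. by apply: eq_bigr => i _; rewrite -(Fn_ord (rev_ord i)). Qed.

Lemma QjE j : Qj A mu j = \prod_(i < m | (j < m - i.+1)%N) Fn (m - i.+1)%N.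
Proof. by apply: eq_bigr => i _; rewrite -(Fn_ord (rev_ord i)). Qed.

Lemma one_sub_Qmat : 1%:M - Qmat A mu =
  \sum_(j < m) Qj A mu j *m ((mu j / rownorm2 A j) *: (arow A j *m (arow A j)^T)).
Proof.
have := tele m Fn; rewrite -QmatE => ->.
apply: eq_bigr => j _; rewrite -QjE Fn_ord mulmxE; congr (_ * _).
by rewrite /Pk opprB addrC subrK.
Qed.

Lemma AS_ident : (AS A mu)^T *m Lam mu *m Mdiag A *m A = 1%:M - Qmat A mu.
Proof.
rewrite one_sub_Qmat /Lam /Mdiag !mul_mx_diag.
apply/matrixP => p q; rewrite !mxE summxE.
apply: eq_bigr => j _; rewrite -scalemxAr mulmxA.
rewrite !mxE big_ord1 /arow /AS !mxE; ring.
Qed.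
End Ident.

Section S.
Import Num.Def.
Local Open Scope sesquilinear_scope.
Variable R : realType.
Local Notation C := (R[i]).
Local Notation phi := (real_complex R).
Lemma conj_phi (x : R) : (phi x)^* = phi x.
Proof. by rewrite conj_Creal // complex_real. Qed.
Lemma Re_add (z w : C) : complex.Re (z + w) = complex.Re z + complex.Re w.
Proof. by case: z; case: w. Qed.
Lemma Im_add (z w : C) : complex.Im (z + w) = complex.Im z + complex.Im w.
Proof. by case: z; case: w. Qed.
Lemma Re_sum n (F : 'I_n -> C) : complex.Re (\sum_i F i) = \sum_i complex.Re (F i).
Proof. by apply: (big_morph _ Re_add). Qed.
Lemma Im_sum n (F : 'I_n -> C) : complex.Im (\sum_i F i) = \sum_i complex.Im (F i).
Proof. by apply: (big_morph _ Im_add). Qed.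
Lemma Re_mulphi (z : C) (b : R) : complex.Re (z * phi b) = complex.Re z * b.
Proof. case: z => a c /=. by rewrite mulr0 subr0. Qed.
Lemma Im_mulphi (z : C) (b : R) : complex.Im (z * phi b) = complex.Im z * b.
Proof. case: z => a c /=. by rewrite mulr0 add0r. Qed.
Lemma Re_phimul (z : C) (b : R) : complex.Re (phi b * z) = b * complex.Re z.
Proof. case: z => a c /=. by rewrite mul0r subr0. Qed.
Lemma Im_phimul (z : C) (b : R) : complex.Im (phi b * z) = b * complex.Im z.
Proof. case: z => a c /=. by rewrite mul0r addr0. Qed.
Lemma decompC (z : C) : z = phi (complex.Re z) + 'i * phi (complex.Im z).
Proof. case: z => a c /=. apply/eqP; rewrite eq_complex /=. apply/andP; split; apply/eqP; simpl; ring. Qed.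
Lemma lephi (a b : R) : (phi a <= phi b) = (a <= b).
Proof. exact: lecR. Qed.

Lemma key n (B : 'M[R]_n) (v : 'cV[R]_n) (c : R) :
  B^T = B ->
  (forall (r : R) (x : 'rV[R]_n), x *m B = r *: x -> r <= c \/ x *m v = 0) ->
  (v^T *m B *m v) 0 0 <= c * (v^T *m v) 0 0.
Proof.
move=> BT H.
set BC := map_mx phi B; set vC := map_mx phi v.
have herm : BC \is hermsymmx.
  apply/is_hermitianmxP; rewrite expr0 scale1r /BC map_trmx BT -map_mx_comp.
  by apply/matrixP => i j; rewrite !mxE /= conj_phi.
have /orthomx_spectralP EBC := hermitian_normalmx herm.
set P := spectralmx BC in EBC; set D := spectral_diag BC in EBC.
have Pu : P \is unitarymx := spectral_unitarymx BC.
have Pun : P \in unitmx := spectral_unit BC.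
have PtP : P^t* *m P = 1%:M by rewrite -invmx_unitary // mulVmx.
have PBC : P *m BC = diag_mx D *m P.
  by rewrite {1}EBC !mulmxA mulmxV // mul1mx.
have Dreal : D \is a realmx := hermitian_spectral_diag_real herm.
have vCc : vC ^ conjC = vC.
  by apply/matrixP => i j; rewrite !mxE conj_phi.
set W := P *m vC.
have VW : vC^T *m P^t* = (map_mx conjC W)^T.
  by rewrite /W map_mxM vCc trmx_mul !map_trmx.
have E1 : phi ((v^T *m B *m v) 0 0) = \sum_j conjC (W j 0) * D 0 j * W j 0.
  have -> : phi ((v^T *m B *m v) 0 0) = (map_mx phi (v^T *m B *m v)) 0 0 by rewrite [RHS]mxE.
  rewrite map_mxM map_mxM -map_trmx -/BC -/vC EBC.
  rewrite invmx_unitary // !mulmxA VW -(mulmxA _ P vC) -/W mul_mx_diag !mxE.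
  by apply: eq_bigr => j _; rewrite !mxE.
have E2 : phi ((v^T *m v) 0 0) = \sum_j conjC (W j 0) * W j 0.
  have -> : phi ((v^T *m v) 0 0) = (map_mx phi (v^T *m v)) 0 0 by rewrite [RHS]mxE.
  rewrite map_mxM -map_trmx -/vC -[vC in _ *m vC]mul1mx -PtP.
  rewrite !mulmxA VW -mulmxA -/W !mxE.
  by apply: eq_bigr => j _; rewrite !mxE.
rewrite -lephi rmorphM /= E1 E2 mulr_sumr; apply: ler_sum => j _.
have /complex_realP [r Dr] : D 0 j \is Num.real by move/mxOverP: Dreal; apply.
have Dr' : D 0 j = phi r by [].
rewrite Dr' mulrAC [phi c * _]mulrC.
have w0 : 0 <= conjC (W j 0) * W j 0 by rewrite mulrC mul_conjC_ge0.
set x : 'rV[R]_n := \row_k complex.Re (P j k).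
set y : 'rV[R]_n := \row_k complex.Im (P j k).
have ejk k : \sum_l P j l * BC l k = phi r * P j k.
  by have := PBC; rewrite mul_diag_mx => /matrixP /(_ j k); rewrite !mxE Dr' => ->.
have xB : x *m B = r *: x.
  apply/matrixP => i k; rewrite !mxE -Re_phimul -ejk Re_sum.
  by apply: eq_bigr => l _; rewrite !mxE Re_mulphi.
have yB : y *m B = r *: y.
  apply/matrixP => i k; rewrite !mxE -Im_phimul -ejk Im_sum.
  by apply: eq_bigr => l _; rewrite !mxE Im_mulphi.
have [rc|xv0] := H r x xB.
  by apply: ler_wpM2l => //; rewrite lephi.
have [rc|yv0] := H r y yB.
  by apply: ler_wpM2l => //; rewrite lephi.
suff -> : W j 0 = 0 by rewrite !(mulr0, mul0r).
have Wj : W j 0 = phi ((x *m v) 0 0) + 'i * phi ((y *m v) 0 0).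
  rewrite /W !mxE !rmorph_sum mulr_sumr -big_split /=.
  apply: eq_bigr => l _; rewrite !mxE !rmorphM /= mulrA -mulrDl.
  by rewrite {1}[P j l]decompC.
by rewrite Wj xv0 yv0 mxE rmorph0 mulr0 addr0.
Qed.
End S.

Lemma minnorm_perp (R : realType) m n (A : 'M[R]_(m, n)) b x :
  min_norm_lsq A b x -> forall w, A *m w = 0 -> dot x w = 0.
Proof.
move=> [_ Hmn] w Aw.
have [->|w0] := eqVneq w 0.
  by rewrite /dot big1 // => i _; rewrite mxE mulr0.
have S0 : 0 < dot w w.
  by rewrite lt_def dot_ge0 andbT; apply/eqP => /dot_eq0 /eqP; rewrite (negbTE w0).
set d := dot x w; set S := dot w w in S0 *.
have := Hmn (x + (- (d / S)) *: w).
rewrite mulmxDr -scalemxAr Aw scaler0 addr0 lexx => /(_ isT).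
rewrite !norm2E ler_sqrt ?dot_ge0 // dotDZ -/d -/S => H.
have E : 2 * - (d / S) * d + (- (d / S)) ^+ 2 * S = - (d ^+ 2 / S).
  by field; rewrite gt_eqF.
have : d ^+ 2 / S <= 0 by move: H; rewrite -addrA E; set X := d ^+ 2 / S; lra.
rewrite ler_pdivrMr // mul0r => H2.
by apply/eqP; rewrite -sqrf_eq0 eq_le H2 sqr_ge0.
Qed.

Theorem corollary3p13 (R : realType) (m n : nat) (A : 'M[R]_(m, n)) (b : 'cV[R]_m)
  (xdag : 'cV[R]_n) (mu : 'I_m -> R) (C : 'M[R]_m) (y : nat -> 'cV[R]_n)
  (pN : 'cV[R]_n) (s : R) :
  (forall i : 'I_m, row i A != 0) ->
  (exists x : 'cV[R]_n, A *m x = b) ->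
  min_norm_lsq A b xdag ->
  (forall i, 0 < mu i < 2) ->
  unit_upper C ->
  AS A mu = C *m A ->
  (forall k, y k.+1 = y k + A^T *m C^T *m Lam mu *m Mdiag A *m (b - A *m y k)) ->
  nullproj A (y 0%N) pN ->
  max_sv_in01 (Qmat A mu) s ->
  forall k : nat, (1 <= k)%N ->
    norm2 (y k - xdag - pN) <= s * norm2 (y k.-1 - xdag - pN) /\
    norm2 (y k - xdag - pN) <= s ^+ k * norm2 (y 0%N - xdag - pN).
Proof.
move=> Hrow [x0 Hx0] Hmin Hmu _ HAS Hy [HpN Hperp] Hs k k1.
have [Hls _] := Hmin.
have Axd : A *m xdag = b.
  have := Hls x0; rewrite Hx0 subrr [norm2 0]norm2E /dot big1 => [|i _]; last by rewrite mxE mulr0.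
  rewrite sqrtr0 norm2E => H.
  have : dot (A *m xdag - b) (A *m xdag - b) <= 0 by rewrite -sqrtr_eq0 eq_le H sqrtr_ge0.
  move=> H2; have : dot (A *m xdag - b) (A *m xdag - b) = 0.
    by apply/eqP; rewrite eq_le H2 dot_ge0.
  by move/dot_eq0/eqP; rewrite subr_eq0 => /eqP.
have xperp := minnorm_perp Hmin.
set Q := Qmat A mu.
have s0 : 0 <= s.
  by case: Hs => [[_ ->]|[[_ /andP [s0 _]] _]] //; exact: ltW.
have HQ : Q = 1%:M - A^T *m C^T *m Lam mu *m Mdiag A *m A.
  by rewrite -trmx_mul -HAS AS_ident opprB addrC subrK.
have contr : forall z, dot (Q *m z) (Q *m z) <= dot z z /\
    (dot z z <= dot (Q *m z) (Q *m z) -> A *m z = 0).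
  have HF : forall k' z', dot (Fn A mu k' *m z') (Fn A mu k' *m z') <= dot z' z' /\
      (dot z' z' <= dot (Fn A mu k' *m z') (Fn A mu k' *m z') ->
        Fn A mu k' *m z' = z' /\ (forall i : 'I_m, val i = k' -> dot (arow A i) z' = 0)).
    move=> k' z'; rewrite /Fn; case: insubP => [i _ ik | nk] /=.
      have [h1 h2] := Pk_contr z' (Hrow i) (Hmu i).
      split => // /h2 [e1 e2]; split => // i' ii'.
      by have -> : i' = i by apply: ord_inj; rewrite ii' ik.
    rewrite mul1mx; split => // _; split => // i' ik.
    by move: nk; rewrite -ik ltn_ord.
  move=> z.
  have := @contract R n m (Fn A mu)
     (fun k z => forall i : 'I_m, val i = k -> dot (arow A i) z = 0) HF z.
  rewrite -QmatE -/Q => -[c1 c2]; split => // H.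
  have [_ HZ] := c2 H; apply/matrixP => i j; rewrite ord1 !mxE.
  apply: etrans (HZ i (ltn_ord i) i erefl).
  by apply: eq_bigr => l _; rewrite /arow !mxE.
have keyQ : forall u, (forall w, A *m w = 0 -> dot u w = 0) ->
    dot (Q *m u) (Q *m u) <= s ^+ 2 * dot u u.
  move=> u up.
  have E : dot (Q *m u) (Q *m u) = (u^T *m (Q^T *m Q) *m u) 0 0.
    by rewrite -dot_mx trmx_mul !mulmxA.
  rewrite E -(dot_mx u u); apply: key; first by rewrite trmx_mul trmxK.
  move=> r x xB.
  set z := x^T.
  have xz : x = z^T by rewrite trmxK.
  have Bz : Q^T *m Q *m z = r *: z.
    apply/matrixP => i j; have /matrixP /(_ j i) := xB.
    rewrite ord1 /z !mxE => <-; apply: eq_bigr => l _; rewrite !mxE.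
    rewrite mulrC; congr (_ * _); apply: eq_bigr => l' _; rewrite !mxE mulrC //.
  have Hz : dot (Q *m z) (Q *m z) = r * dot z z.
    by rewrite -dot_mx trmx_mul -mulmxA (mulmxA Q^T) Bz -scalemxAr mxE dot_mx.
  have xu : dot z u = 0 -> x *m u = 0.
    by move=> h; apply/matrixP => i j; rewrite !ord1 xz dot_mx h mxE.
  have [r1|r1] := lerP 1 r.
    right; apply: xu; rewrite dotC; apply: up; apply: (proj2 (contr z)).
    by rewrite Hz ler_peMl // dot_ge0.
  have [z0|z0] := eqVneq z 0.
    by right; apply: xu; rewrite z0 /dot big1 // => i _; rewrite mxE mul0r.
  have zz : 0 < dot z z.
    by rewrite lt_def dot_ge0 andbT; apply/eqP => /dot_eq0 /eqP; rewrite (negbTE z0).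
  have r0 : 0 <= r by rewrite -(pmulr_lge0 _ zz) -Hz dot_ge0.
  left; have [->|rpos] := eqVneq r 0; first by rewrite sqr_ge0.
  have rp : 0 < r by rewrite lt_def rpos r0.
  have sv : singular_value Q (Num.sqrt r).
    split; first exact: sqrtr_ge0. rewrite sqr_sqrtr //; apply/eigenvalueP; exists x => //.
    by apply/eqP => xe; move/eqP: z0; apply; rewrite /z xe trmx0.
  have sv01 : 0 < Num.sqrt r < 1 by rewrite sqrtr_gt0 rp /= -sqrtr1 ltr_sqrt.
  case: Hs => [[Hn _]|[_ Hmax]]; first by exfalso; apply: (Hn (Num.sqrt r)).
  have := Hmax _ sv sv01 => H.
  rewrite -(sqr_sqrtr r0) !expr2; exact: (ler_pM (sqrtr_ge0 r) (sqrtr_ge0 r) H H).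
have dAT : forall (p : nat) (v : 'cV[R]_m) w, A *m w = 0 -> dot (A^T *m v) w = 0.
  by move=> p v w Aw; rewrite -dot_mx trmx_mul trmxK -mulmxA Aw mulmx0 mxE.
have erec : forall j, y j.+1 - xdag - pN = Q *m (y j - xdag - pN).
  move=> j; rewrite Hy HQ.
  set K := A^T *m C^T *m Lam mu *m Mdiag A.
  rewrite mulmxBl mul1mx -(mulmxA K A) !mulmxBr HpN mulmx0 subr0 Axd opprB.
  set X := K *m b - K *m (A *m y j).
  by rewrite (addrAC (y j) X) (addrAC _ X).
have eperp : forall j w, A *m w = 0 -> dot (y j - xdag - pN) w = 0.
  elim => [|j IH] w Aw.
    rewrite addrAC dotDl dotNl xperp // subr0 -dot_mx.
    by rewrite (Hperp w Aw) mxE.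
  by rewrite erec HQ mulmxBl mul1mx dotDl dotNl IH // -!mulmxA dAT // oppr0 addr0.
have step : forall j, norm2 (y j.+1 - xdag - pN) <= s * norm2 (y j - xdag - pN).
  move=> j; rewrite erec !norm2E -(ger0_norm s0) -sqrtr_sqr -sqrtrM ?sqr_ge0 //.
  rewrite ler_sqrt; last by rewrite mulr_ge0 ?sqr_ge0 ?dot_ge0.
  by apply: keyQ => w; apply: eperp.
case: k k1 => // k' _; split; first exact: step.
have : forall j, norm2 (y j - xdag - pN) <= s ^+ j * norm2 (y 0%N - xdag - pN).
  elim => [|j IH]; first by rewrite expr0 mul1r.
  apply: le_trans (step j) _; rewrite exprS -mulrA; by apply: ler_wpM2l.
by apply.
Qed.
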